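(* Let a countable group $G$ act continuously on a Polish space $X$ and let $E$ be an equivalence relation on $X$. If $E\subseteq E^X_G$ and $E$ is $G$-clopen, then $E$ is an $F_\sigma$ subset of $X\times X$ (in particular Borel). If $E$ is a clopen subset of $X\times X$, then $E$ is $G$-clopen.
   Context: $E^X_G$ is the orbit equivalence relation $x\mathrel{E^X_G}y\iff\exists g\in G\,(g\cdot x=y)$. A relation $R\subseteq X\times X$ is $G$-clopen if for every $g\in G$ the set $\{x\in X: (x,g\cdot x)\in R\}$ is clopen in $X$. *)

(* Defs.v *)
From mathcomp Require Import all_boot all_order all_algebra.
From mathcomp Require Import all_classical all_reals all_analysis.
From mathcomp Require Import borel_hierarchy.
From mathcomp Require Import Rstruct Rstruct_topology.
Set Implicit Arguments. Unset Strict Implicit. Unset Printing Implicit Defensive.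
Import Order.TTheory GRing.Theory Num.Theory.
Local Open Scope classical_set_scope.
Local Open Scope ring_scope.

Definition polish (X : topologicalType) : Prop :=
  (exists d : X -> X -> Rdefinitions.R,
    [/\ (forall x y, 0 <= d x y) /\ (forall x y, d x y = 0 <-> x = y),
        (forall x y, d x y = d y x),
        (forall x y z, d x z <= d x y + d y z),
        (forall A : set X, open A <->
           (forall x, A x -> (exists2 e, 0 < e & forall y, d x y < e -> A y))) &
        (forall u : nat -> X,
           (forall e, 0 < e -> exists N, forall m n, (N <= m)%N -> (N <= n)%N ->
               d (u m) (u n) < e) ->
           exists l : X, u @ \oo --> l)])
  /\ exists D : set X, countable D /\ dense D.

Definition is_group (G : Type) (mul : G -> G -> G) (one : G) (inv : G -> G) :=
  [/\ (forall a b c, mul a (mul b c) = mul (mul a b) c),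
      (forall a, mul one a = a), (forall a, mul a one = a),
      (forall a, mul (inv a) a = one) & (forall a, mul a (inv a) = one)].

Definition is_action (G X : Type) (mul : G -> G -> G) (one : G)
  (act : G -> X -> X) :=
  (forall x, act one x = x) /\ (forall g h x, act (mul g h) x = act g (act h x)).

Definition orbit_rel (G X : Type) (act : G -> X -> X) : set (X * X) :=
  [set p | exists g, act g p.1 = p.2].

Definition G_clopen (G : Type) (X : topologicalType) (act : G -> X -> X)
  (R : set (X * X)) : Prop :=
  forall g, clopen [set x | R (x, act g x)].

Definition is_equiv_relation (X : Type) (E : set (X * X)) : Prop :=
  [/\ (forall x, E (x, x)), (forall x y, E (x, y) -> E (y, x)) &
      (forall x y z, E (x, y) -> E (y, z) -> E (x, z))].

(* Main.v *)
Require Import Defs.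
From mathcomp Require Import all_boot all_order all_algebra.
From mathcomp Require Import all_classical all_reals all_analysis.
From mathcomp Require Import borel_hierarchy.
From mathcomp Require Import Rstruct Rstruct_topology.
From mathcomp Require Import lra.
Import Order.TTheory GRing.Theory Num.Theory.
Local Open Scope classical_set_scope.
Local Open Scope ring_scope.

Lemma polish_hausdorff (X : topologicalType) : polish X -> hausdorff_space X.
Proof.
move=> [[d [[d0 dE] dsym dtri dopen _]] _].
rewrite open_hausdorff => x y xy.
have e0 : 0 < d x y.
  rewrite lt0r d0 andbT; apply/eqP => /dE h; by move: xy; rewrite h eqxx.
have Bop : forall z, open [set w | d z w < d x y / 2].
  move=> z; apply/dopen => w /= hw; exists (d x y / 2 - d z w); first by rewrite subr_gt0.
  move=> v hv; have := dtri z w v; clear -hv hw; move=> h; lra.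
have dxx : forall z, d z z = 0 by move=> z; apply/dE.
exists ([set w | d x w < d x y / 2], [set w | d y w < d x y / 2]).
  by rewrite !inE /= !dxx; split; clear -e0; lra.
split; [exact: Bop|exact: Bop|].
apply/eqP; apply/seteqP; split => // w [/= h1 h2].
have := dtri x w y; rewrite (dsym w y); clear -h1 h2; move=> h; lra.
Qed.

Lemma closed_graph (X : topologicalType) (f : X -> X) :
  hausdorff_space X -> continuous f -> closed [set p : X * X | f p.1 = p.2].
Proof.
move=> hX fc; rewrite -openC openE => p /= hp.
have np : f p.1 != p.2 by apply/eqP.
move: hX; rewrite open_hausdorff => /(_ _ _ np) [[U V]] /=; rewrite !inE => -[Ux Vy] [oU oV /eqP UV].
have oW : open ([set q : X * X | U (f q.1)] `&` [set q | V q.2]).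
  apply: openI.
  - have -> : [set q : X * X | U (f q.1)] = (f \o fst) @^-1` U by [].
    apply: (proj1 (continuousP (f \o fst))) oU => q; apply: continuous_comp; [exact: cvg_fst|exact: fc].
  - have -> : [set q : X * X | V q.2] = snd @^-1` V by [].
    apply: (proj1 (continuousP (@snd X X))) oV => q; exact: cvg_snd.
have nW : nbhs p ([set q : X * X | U (f q.1)] `&` [set q | V q.2]).
  by apply: open_nbhs_nbhs; split.
apply: filterS nW.
move=> q [/= h1 h2] h3; have : (U `&` V) q.2 by split => //; rewrite -h3.
by move/eqP: UV => ->.
Qed.

Local Close Scope ring_scope.

Theorem lemma3p4 (G : Type) (mul : G -> G -> G) (one : G) (inv : G -> G)
  (X : topologicalType) (act : G -> X -> X) (E : set (X * X)) :
  is_group mul one inv ->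
  countable [set: G] ->
  is_action mul one act ->
  (forall g, continuous (act g)) ->
  polish X ->
  is_equiv_relation E ->
  ((E `<=` orbit_rel act -> G_clopen act E -> Fsigma E) /\
   (clopen E -> G_clopen act E)).
Proof.
move=> _ cG _ actc pX _; split; last first.
  move=> [oE cE] g.
  have cont : continuous (fun x : X => (x, act g x)).
    by move=> x; apply: cvg_pair; [exact: cvg_id|exact: actc].
  have -> : [set x | E (x, act g x)] = (fun x : X => (x, act g x)) @^-1` E by [].
  split; first exact: (proj1 (continuousP _)) cont _ oE.
  exact: (proj1 (continuous_closedP _)) cont _ cE.
move=> EO Gc.
have hX := @polish_hausdorff X pX.
pose S g := [set p : X * X | E (p.1, act g p.1)] `&` [set p | act g p.1 = p.2].
have cS : forall g, closed (S g).
  move=> g; apply: closedI; last exact: closed_graph.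
  have -> : [set p : X * X | E (p.1, act g p.1)] = fst @^-1` [set x | E (x, act g x)] by [].
  apply: (proj1 (continuous_closedP (@fst X X))) (proj2 (Gc g)) => q; exact: cvg_fst.
move/countable_injP: cG => [f finj].
exists (fun n => [set p | exists g, f g = n /\ S g p]).
  move=> n; have [[g0 hg0]|nex] := pselect (exists g, f g = n).
    have -> : [set p | exists g, f g = n /\ S g p] = S g0; last exact: cS.
    apply/seteqP; split => p /=.
      move=> [g [fg Sg]]; have : g = g0 by apply: finj; rewrite ?in_setT // fg hg0.
      by move=> <-.
    by move=> Sp; exists g0.
  have -> : [set p | exists g, f g = n /\ S g p] = set0; last exact: closed0.
  by apply/seteqP; split => p //= [g [fg _]]; apply: nex; exists g.
apply/seteqP; split.
  move=> [x y] Exy; have [g /= hg] := EO _ Exy.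
  exists (f g) => //; exists g; split => //; split => //=; by rewrite hg.
move=> [x y] [n _ [g [_ [/= h1 h2]]]]; by rewrite -h2.
Qed.
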